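(* Let $H=(U,F)$ be a $d$-regular graph on $n$ vertices and let $k$ be an integer with $1 \le k \le d$. Let $G'$ be obtained from $H$ by subdividing every edge of $H$ once (replacing each edge $\{u,w\}$ by a new vertex $x_{uw}$ and edges $\{u,x_{uw}\},\{x_{uw},w\}$). Choose $\theta_i,\phi$ so that every original vertex $u\in U$ is accepting and every subdivision vertex is rejecting, and set $q=1$ and $p = d - (k-1)/2 + \varepsilon$ with $0<\varepsilon<1/n^2$. Then $H$ contains a clique on $k$ vertices if and only if there is a seed set $S$ in $G'$ with $|S| \le k$ and $\pi(S) > 0$.
   Context: Basic model on a finite undirected graph $G$: each agent $i$ has $\theta_i\in[0,1]$, the product has $\phi\in[0,1]$; agent $i$ is accepting if $\theta_i \le \phi$ and rejecting otherwise. A seed set is a set $S$ of accepting agents. $V(S)$ is the set of agents $i$ for which there exist $j \in S$ and a path in $G$ from $i$ to $j$ all of whose internal vertices are accepting (paths of length $0$ allowed). $V^+(S)$ and $V^-(S)$ are the accepting and rejecting agents in $V(S)$, and $\pi(S) = p\,|V^+(S)| - q\,|V^-(S)|$. *)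

(* Defs.v *)
From HB Require Import structures.
From mathcomp Require Import all_boot all_order all_algebra.
Set Implicit Arguments. Unset Strict Implicit. Unset Printing Implicit Defensive.
Import Order.TTheory GRing.Theory Num.Theory.
Local Open Scope ring_scope.

Section Model.
Variables (R : realFieldType) (V : finType) (g : rel V).
Variables (theta : V -> R) (phi : R).

Definition accepting (i : V) : bool := theta i <= phi.

(* Since seeds are accepting,
   for j in a seed set this is exactly "all internal vertices accepting". *)
Definition reach_to (i j : V) : bool :=
  connect (fun x y => g x y && accepting y) i j.

Definition seed_set (S : {set V}) : bool := [forall j in S, accepting j].

Definition Vof (S : {set V}) : {set V} :=
  [set i | [exists j in S, reach_to i j]].
Definition Vplus (S : {set V}) : {set V} := [set i in Vof S | accepting i].
Definition Vminus (S : {set V}) : {set V} := [set i in Vof S | ~~ accepting i].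

Definition payoff (p q : R) (S : {set V}) : R :=
  p * (#|Vplus S|)%:R - q * (#|Vminus S|)%:R.
End Model.

Definition simple_graph (U : finType) (e : rel U) : Prop :=
  symmetric e /\ irreflexive e.
Definition regular (U : finType) (e : rel U) (d : nat) : Prop :=
  forall u : U, #|[set w | e u w]| = d.
Definition has_clique (U : finType) (e : rel U) (k : nat) : Prop :=
  exists K : {set U}, #|K| = k /\
    (forall u w, u \in K -> w \in K -> u != w -> e u w).

(* One subdivision vertex per (unordered) edge {u,w}: represented by the
   ordered pair with enum_rank u < enum_rank w. *)
Definition sedge (U : finType) (e : rel U) :=
  {pw : U * U | e pw.1 pw.2 && (enum_rank pw.1 < enum_rank pw.2)%N}.

Definition subdiv_vertex (U : finType) (e : rel U) : finType :=
  (U + sedge e)%type.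

Definition subdiv_rel (U : finType) (e : rel U) : rel (subdiv_vertex e) :=
  fun a b =>
    match a, b with
    | inl u, inr x => (u == (val x).1) || (u == (val x).2)
    | inr x, inl u => (u == (val x).1) || (u == (val x).2)
    | _, _ => false
    end.
Arguments subdiv_rel [U] e _ _.

(* Main.v *)
Require Import Defs.
From HB Require Import structures.
From mathcomp Require Import all_boot all_order all_algebra.
From mathcomp Require Import lra.
Import Order.TTheory GRing.Theory Num.Theory.

Module Helpers.
Set Implicit Arguments. Unset Strict Implicit. Unset Printing Implicit Defensive.

Section Comb.
Variables (U : finType) (e : rel U).
Hypothesis He : simple_graph e.

Lemma card_sumb (T : finType) (P : pred T) : \sum_(p : T) (P p : nat) = #|[set p | P p]|.
Proof. by rewrite -sum1dep_card [RHS]big_mkcond; apply: eq_bigr => p _; case: (P p). Qed.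

Lemma sum_sedge (F : U * U -> nat) :
  \sum_(p | e p.1 p.2 && (enum_rank p.1 < enum_rank p.2)%N) F p = \sum_(x : sedge e) F (val x).
Proof.
rewrite (reindex_omap (val : sedge e -> U * U) insub); last first.
  by move=> i Pi; rewrite insubT.
apply: eq_bigl=> -[i iA]/=; rewrite insubT ?iA /=; apply/eqP; congr Some; exact: val_inj.
Qed.

Lemma swap_inj : injective (fun p : U * U => (p.2, p.1)).
Proof. by move=> [a b] [c d] [-> ->]. Qed.

Lemma sum_dir (G : U -> U -> bool) (HG : forall u w, G u w = G w u) :
  \sum_(p : U * U) (e p.1 p.2 && G p.1 p.2 : nat) =
  2 * \sum_(x : sedge e) (G (val x).1 (val x).2 : nat).
Proof.
case: He => Hs Hi.
have Hsp : forall p : U * U, (e p.1 p.2 && G p.1 p.2 : nat) =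
   ((e p.1 p.2 && G p.1 p.2) && (enum_rank p.1 < enum_rank p.2)%N : nat) +
   ((e p.1 p.2 && G p.1 p.2) && (enum_rank p.2 < enum_rank p.1)%N : nat).
  move=> [u w] /=; case E: (e u w) => //=.
  have : u != w by apply/eqP => uw; move: E; rewrite uw Hi.
  rewrite -(inj_eq enum_rank_inj).
  by case: (G u w); case: ltngtP => // /val_inj ->; rewrite eqxx.
rewrite (eq_bigr _ (fun p _ => Hsp p)) big_split /=.
rewrite [X in (_ + X)%N](reindex_inj swap_inj) /=.
have -> : \sum_(i : U * U) ((e i.2 i.1 && G i.2 i.1) && (enum_rank i.1 < enum_rank i.2)%N : nat)
   = \sum_(i : U * U) ((e i.1 i.2 && G i.1 i.2) && (enum_rank i.1 < enum_rank i.2)%N : nat).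
  by apply: eq_bigr => -[u w] _ /=; rewrite Hs HG.
rewrite addnn -mul2n; congr (2 * _)%N.
rewrite -(sum_sedge (fun p => (G p.1 p.2 : nat))) [RHS]big_mkcond /=; apply: eq_bigr => -[u w] _ /=.
by case: (e u w); case: (G u w); case: (_ < _)%N.
Qed.

Lemma sum_deg (d : nat) (Hr : regular e d) (S : {set U}) :
  \sum_(p : U * U) (e p.1 p.2 && (p.1 \in S) : nat) = (#|S| * d)%N.
Proof.
rewrite -(pair_bigA _ (fun u w => (e u w && (u \in S) : nat))) /=.
rewrite -sum_nat_const [RHS]big_mkcond /=; apply: eq_bigr => u _.
case: (u \in S).
  by rewrite -(Hr u) -card_sumb; apply: eq_bigr => w _; rewrite andbT.
by rewrite big1 // => w _; rewrite andbF.
Qed.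

Lemma sum_deg2 (d : nat) (Hr : regular e d) (S : {set U}) :
  \sum_(p : U * U) (e p.1 p.2 && (p.2 \in S) : nat) = (#|S| * d)%N.
Proof.
case: He => Hs Hi.
rewrite -(sum_deg Hr S) (reindex_inj swap_inj) /=.
by apply: eq_bigr => -[u w] _ /=; rewrite Hs.
Qed.

End Comb.

Section Comb2.
Variables (U : finType) (e : rel U).
Hypothesis He : simple_graph e.
Variable S : {set U}.

Definition Dset := [set p : U * U | (p.1 \in S) && (p.2 \in S) && (p.1 != p.2)].
Definition Bset := [set p : U * U | e p.1 p.2 && ((p.1 \in S) && (p.2 \in S))].

Lemma card_Dset : (#|Dset| + #|S| = #|S| * #|S|)%N.
Proof.
rewrite -cardsX -(cardsID [set p : U * U | p.1 == p.2] (setX S S)) addnC.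
congr (_ + _)%N; last first.
  by apply: eq_card => -[u w]; rewrite !inE /=; case: (u == w); rewrite ?andbT ?andbF.
have -> : setX S S :&: [set p : U * U | p.1 == p.2] = (fun u => (u, u)) @: S.
  apply/setP => -[u w]; rewrite !inE /=; apply/idP/imsetP.
    by case/andP => /andP [uS wS] /eqP <-; exists u.
  by case=> x xS [-> ->]; rewrite xS eqxx.
by rewrite card_imset // => a b [].
Qed.

Lemma Bsub : Bset \subset Dset.
Proof.
case: He => Hs Hi.
apply/subsetP => -[u w]; rewrite !inE /= => /andP [E ->] /=.
by apply/eqP => uw; move: E; rewrite uw Hi.
Qed.

Lemma card_Bset : (#|Bset| + #|S| <= #|S| * #|S|)%N.
Proof. by rewrite -card_Dset leq_add2r subset_leq_card // Bsub. Qed.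

Lemma card_Bset_eq : (#|Bset| + #|S| = #|S| * #|S|)%N ->
  forall u w, u \in S -> w \in S -> u != w -> e u w.
Proof.
rewrite -card_Dset => /addIn H u w uS wS uw.
have /eqP HBD : Bset == Dset by rewrite eqEcard Bsub H leqnn.
have : (u, w) \in Dset by rewrite inE /= uS wS uw.
by rewrite -HBD inE /= => /andP [].
Qed.

Lemma card_Bset_clique : (forall u w, u \in S -> w \in S -> u != w -> e u w) ->
  (#|Bset| + #|S| = #|S| * #|S|)%N.
Proof.
move=> Hc; rewrite -card_Dset; suff -> : Bset = Dset by [].
apply/setP => -[u w]; rewrite !inE /=.
case uS: (u \in S); case wS: (w \in S) => //=; rewrite ?andbF //.
case E: (u != w); first by rewrite Hc.
move/negbFE/eqP: E => ->; case: He => _ Hi; by rewrite Hi.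
Qed.

End Comb2.

Section Graph.
Variables (R : realFieldType) (U : finType) (e : rel U) (d : nat).
Variables (theta : subdiv_vertex e -> R) (phi : R).
Hypothesis He : simple_graph e.
Hypothesis Hr : regular e d.
Hypothesis Hacc : forall u : U, accepting theta phi (inl u).
Hypothesis Hrej : forall x : sedge e, ~~ accepting theta phi (inr x).

Local Notation g := (subdiv_rel e).
Local Notation acc := (accepting theta phi).

Lemma reach_char i j : reach_to g theta phi i j = (i == j) || (g i j && acc j).
Proof.
apply/idP/idP.
  move/connectP => [p Hp ->]; case: p Hp => [|y p] /=; first by rewrite eqxx.
  move/andP => [/andP [gy ay] Hp].
  case: y gy ay Hp => [u|x] gy ay Hp; last by move: ay; rewrite (negbTE (Hrej x)).
  case: p Hp => [|z p] /=; first by rewrite gy ay orbT.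
  by case: z => [v|x] //=; rewrite (negbTE (Hrej x)) andbF.
case/orP => [/eqP -> | /andP [h a]]; first exact: connect0.
by apply: connect1; rewrite /= h a.
Qed.

Lemma card_sumg (T : finType) (A : {set T}) : #|A| = \sum_(i : T) (i \in A : nat).
Proof. by rewrite -sum1_card big_mkcond; apply: eq_bigr => i _; case: (i \in A). Qed.

Lemma key (S : {set subdiv_vertex e}) : seed_set theta phi S ->
  let S' := [set u | inl u \in S] in
  [/\ #|Vplus g theta phi S| = #|S'|, #|S| = #|S'| &
      (2 * #|Vminus g theta phi S| + #|Bset e S'| = 2 * (#|S'| * d))%N].
Proof.
move=> /forallP HS S'.
have Sinr : forall x, (inr x \in S) = false.
  by move=> x; apply/negbTE/negP => xS; move: (HS (inr x)); rewrite xS (negbTE (Hrej x)).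
have HSS : #|S| = #|S'|.
  rewrite !card_sumg big_sumType /= [X in (_ + X)%N]big1 ?addn0; last by move=> x _; rewrite Sinr.
  by apply: eq_bigr => u _; rewrite inE.
have HVp : Vplus g theta phi S = S.
  apply/setP => i; rewrite !inE; apply/idP/idP.
    case/andP => /existsP [j /andP [jS]]; rewrite reach_char => /orP [/eqP -> //|].
    case: i => [u|x] /=; last by move=> _; rewrite (negbTE (Hrej x)).
    by case: j jS => [v|y] //=; rewrite Sinr.
  move=> iS; rewrite (implyP (HS i) iS) andbT; apply/existsP; exists i.
  by rewrite iS reach_char eqxx.
split => //; first by rewrite HVp.
have HVm : forall i, (i \in Vminus g theta phi S) = ~~ acc i && [exists j in S, g i j].
  move=> i; rewrite !inE andbC; case: (boolP (acc i)) => //= ai.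
  apply/existsP/existsP => -[j /andP [jS]].
    rewrite reach_char => /orP [/eqP ij|/andP [gij _]]; last by exists j; rewrite jS.
    by move: ai; rewrite ij (implyP (HS j) jS).
  by move=> gij; exists j; rewrite jS reach_char gij (implyP (HS j) jS) orbT.
have Hm : #|Vminus g theta phi S| =
    \sum_(x : sedge e) (((val x).1 \in S') || ((val x).2 \in S') : nat).
  rewrite card_sumg big_sumType /= big1 ?add0n; last by move=> u _; rewrite HVm Hacc.
  apply: eq_bigr => x _; rewrite HVm (Hrej x) /=; congr (nat_of_bool _).
  rewrite !inE; apply/existsP/idP.
    by case=> -[v|y] /andP [vS] //= /orP [/eqP <-|/eqP <-]; rewrite vS ?orbT.
  by case/orP => H; [exists (inl (val x).1) | exists (inl (val x).2)]; rewrite H /= eqxx ?orbT.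
rewrite Hm -(@sum_dir _ _ He (fun u w => (u \in S') || (w \in S'))) /=; last by move=> u w; rewrite orbC.
rewrite /Bset -card_sumb mul2n -addnn -{1}(sum_deg Hr S') -(sum_deg2 He Hr S') -!big_split /=.
by apply: eq_bigr => -[u w] _ /=; case: (e u w); case: (u \in S'); case: (w \in S').
Qed.

End Graph.
End Helpers.
Import Helpers.
Unset Implicit Arguments. Set Strict Implicit. Set Printing Implicit Defensive.
Local Open Scope ring_scope.


Theorem mainTheorem9 (R : realFieldType) (U : finType) (e : rel U) (d k : nat)
  (theta : subdiv_vertex e -> R) (phi eps : R) :
  simple_graph e -> regular e d ->
  (1 <= k)%N -> (k <= d)%N ->
  (forall i, 0 <= theta i <= 1) -> 0 <= phi <= 1 ->
  (forall u : U, accepting theta phi (inl u)) ->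
  (forall x : sedge e, ~~ accepting theta phi (inr x)) ->
  0 < eps -> eps < 1 / ((#|U| ^ 2)%N)%:R ->
  (has_clique e k <->
   exists S : {set subdiv_vertex e},
     [/\ seed_set theta phi S, (#|S| <= k)%N &
         0 < payoff (subdiv_rel e) theta phi
               (d%:R - (k%:R - 1) / 2 + eps) 1 S]).
Proof.
move=> He Hr k1 kd _ _ Hacc Hrej eps0 epsn.
have n2 : (2 <= #|U|)%N.
  case: (posnP #|U|) => [n0|npos].
    by exfalso; move: epsn; rewrite n0 exp0n // div1r invr0; apply/negP; rewrite -leNgt ltW.
  move/card_gt0P: npos => [u _].
  have : (0 < #|[set w | e u w]|)%N by rewrite Hr; apply: leq_trans kd.
  move/card_gt0P => [w]; rewrite inE => euw.
  have uw : u != w by apply/eqP => uw; move: euw; rewrite uw; case: He => _ ->.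
  by have := max_card (mem [set u; w]); rewrite cards2 uw.
have Heps : forall s : nat, (s <= #|U|)%N -> 2 * s%:R * eps < 1.
  move=> s sn.
  have Np : 0 < (#|U| ^ 2)%N%:R :> R by rewrite ltr0n expn_gt0; case: #|U| n2.
  move: epsn; rewrite ltr_pdivlMr // natrX => H.
  have sN : s%:R <= #|U|%:R :> R by rewrite ler_nat.
  have N2 : 2 <= #|U|%:R :> R by rewrite (ler_nat R 2).
  rewrite expr2 in H.
  set N := #|U|%:R : R in H sN N2.
  have h1 : 2 * s%:R * eps <= 2 * N * eps by nra.
  have hNe : 0 <= N * eps by nra.
  have h2 : 2 * N * eps <= N * N * eps by nra.
  lra.
have Pexp : forall S : {set subdiv_vertex e}, seed_set theta phi S ->
   let S' := [set u | inl u \in S] in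
   2 * payoff (subdiv_rel e) theta phi (d%:R - (k%:R - 1) / 2 + eps) 1 S =
   #|S'|%:R * (1 - k%:R + 2 * eps) + #|Bset e S'|%:R.
  move=> S seed S'.
  have [HVp HSS Hm] := key He Hr Hacc Hrej seed.
  rewrite /payoff HVp.
  have := congr1 (fun x => x%:R : R) Hm; rewrite /= !natrD !natrM => Hm'.
  rewrite -/S' mul1r. nra.
split.
  case=> K [cK Hc].
  have inl_inj : injective (@inl U (sedge e)) by move=> a b [].
  have seed : seed_set theta phi (inl @: K).
    by apply/forallP => j; apply/implyP => /imsetP [u _ ->]; exact: Hacc.
  exists (inl @: K); split => //; first by rewrite card_imset // cK.
  have := Pexp _ seed; rewrite /=.
  have -> : [set u : U | (inl u : subdiv_vertex e) \in inl @: K] = K.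
    by apply/setP => u; rewrite inE mem_imset.
  have HB := card_Bset_clique He Hc.
  have := congr1 (fun x => x%:R : R) HB; rewrite /= !natrD !natrM cK => HB' P2.
  have kp : 0 < k%:R * eps :> R by rewrite mulr_gt0 // ltr0n.
  nra.
case=> S [seed cS pos].
have [HVp HSS Hm] := key He Hr Hacc Hrej seed.
have P2 := Pexp _ seed; rewrite /= in P2.
set S' := [set u | inl u \in S] in HSS P2.
have sk : (#|S'| <= k)%N by rewrite -HSS.
have sn : (#|S'| <= #|U|)%N by apply: max_card.
have hB := card_Bset He S'.
have he := Heps _ sn.
have hB' : (#|Bset e S'|%:R + #|S'|%:R <= #|S'|%:R * #|S'|%:R :> R)
  by rewrite -natrD -natrM ler_nat.
have sk' : #|S'|%:R <= k%:R :> R by rewrite ler_nat.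
have s0 : 0 <= #|S'|%:R :> R by [].
have he1 : 2 * 1%:R * eps < 1 by apply: Heps; apply: leq_trans n2.
rewrite mulr1 in he1.
have eqk : #|S'| = k.
  apply/eqP; rewrite eqn_leq sk /=; rewrite leqNgt; apply/negP => lt.
  have lt' : #|S'|%:R + 1 <= k%:R :> R by rewrite natr1 ler_nat.
  nra.
exists S'; split => //.
apply: card_Bset_eq => //.
apply/eqP; rewrite eqn_leq hB /= leqNgt; apply/negP => lt.
have lt' : #|Bset e S'|%:R + #|S'|%:R + 1 <= #|S'|%:R * #|S'|%:R :> R
  by rewrite -natrD natr1 -natrM ler_nat.
rewrite eqk in lt' P2 he.
nra.
Qed.
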